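(* Let $C\in\mathbb R^{d\times d}$ satisfy Condition A and let $h(t):=\|e^{-Ct}\|_{\mathcal B(\mathbb R^d)}$. For each $m\ge1$ and each $D^{(m)}(0)\in F^{(m)}$, the solution $D^{(m)}(t)$ of $\dot D^{(m)}_\alpha=-\sum_{j,l=1}^d\alpha_jC_{jl}D^{(m)}_{(\alpha^{(j-)})^{(l+)}}$, $\alpha\in S^{(m)}$, satisfies $$\|D^{(m)}(t)\|_{\mathcal F}\le h(t)^m\|D^{(m)}(0)\|_{\mathcal F},\qquad t\ge0.$$ Moreover, $$\sup_{0\ne D^{(m)}(0)\in F^{(m)}}\frac{\|D^{(m)}(t)\|_{\mathcal F}}{\|D^{(m)}(0)\|_{\mathcal F}}=h(t)^m,\qquad t\ge 0.$$
   Context: $C_S=\frac12(C+C^T)$; Condition A: $C_S$ positive semi-definite and no non-trivial $C^T$-invariant subspace of $\ker C_S$. $\|e^{-Ct}\|_{\mathcal B(\mathbb R^d)}$ is the operator norm w.r.t. the Euclidean norm. $F^{(m)}$ is the space of symmetric $m$-tensors over $\mathbb R^d$ with Frobenius norm $\|A\|_{\mathcal F}=(\sum_{i_1,\dots,i_m=1}^dA_{i_1\dots i_m}^2)^{1/2}$. $S^{(m)}=\{\alpha\in\mathbb N_0^d:|\alpha|=m\}$; for $A\in F^{(m)}$, $A_\alpha:=A_{i_1\dots i_m}$ for any index with $\#\{r:i_r=k\}=\alpha_k$ for all $k$. $\alpha^{(l\pm)}_j=\alpha_j$ ($j\ne l$), $\alpha^{(l\pm)}_l=(\alpha_l\pm1)_+$.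 (This tensor ODE is the evolution of the rescaled Hermite coefficients $d_\alpha/\gamma_\alpha$, $\gamma_\alpha=m!/\alpha!$, of solutions of the Fokker–Planck equation $\partial_tf=\mathrm{div}_x(C_S\nabla_xf+Cxf)$.) *)

(* Defs.v *)
From HB Require Import structures.
From mathcomp Require Import all_boot all_order all_algebra fingroup perm.
From mathcomp Require Import all_classical all_reals all_analysis.
Set Implicit Arguments. Unset Strict Implicit. Unset Printing Implicit Defensive.
Import Order.TTheory GRing.Theory Num.Theory numFieldNormedType.Exports.
Local Open Scope classical_set_scope.
Local Open Scope ring_scope.

Section Defs.
Variable R : realType.

Definition norm2 d (x : 'cV[R]_d) : R := Num.sqrt (\sum_i (x i 0) ^+ 2).

Definition opnorm d (M : 'M[R]_d) : R :=
  sup [set norm2 (M *m x) | x in [set x : 'cV[R]_d | norm2 x <= 1]].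

Definition expmx d (A : 'M[R]_d) : 'M[R]_d :=
  \matrix_(i, j) limn (series (fun k : nat => (A ^+ k) i j / (k`!)%:R)).

Definition symp d (C : 'M[R]_d) : 'M[R]_d := 2^-1 *: (C + C^T).

Definition psd d (M : 'M[R]_d) : Prop :=
  M^T = M /\ forall x : 'cV[R]_d, 0 <= (x^T *m M *m x) 0 0.

Definition is_subspace d (V : set 'cV[R]_d) : Prop :=
  V 0 /\ (forall x y, V x -> V y -> V (x + y)) /\ (forall (a : R) x, V x -> V (a *: x)).

Definition conditionA d (C : 'M[R]_d) : Prop :=
  psd (symp C) /\
  forall V : set 'cV[R]_d, is_subspace V ->
    (forall x, V x -> symp C *m x = 0) ->
    (forall x, V x -> V (C^T *m x)) ->
    V = [set 0].

Definition tensor d m := {ffun 'I_m -> 'I_d} -> R.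

Definition symmetric_tensor d m (A : tensor d m) : Prop :=
  forall (s : {perm 'I_m}) (i : {ffun 'I_m -> 'I_d}), A [ffun r => i (s r)] = A i.

Definition frob d m (A : tensor d m) : R := Num.sqrt (\sum_i (A i) ^+ 2).

Definition multi_index d := {ffun 'I_d -> nat}.

Definition mi_abs d (a : multi_index d) : nat := \sum_k a k.

Definition mult d m (i : {ffun 'I_m -> 'I_d}) : multi_index d :=
  [ffun k => #|[set r | i r == k]|].

(* A_alpha := A_{i_1...i_m} for any index with multiplicities alpha *)
Definition tensor_at d m (A : tensor d m) (a : multi_index d) : R :=
  if [pick i | mult i == a] is Some i then A i else 0.

(* alpha^(l+) and alpha^(l-) (the latter truncated at 0) *)
Definition mi_plus d (a : multi_index d) (l : 'I_d) : multi_index d :=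
  [ffun k => if k == l then (a k).+1 else a k].
Definition mi_minus d (a : multi_index d) (l : 'I_d) : multi_index d :=
  [ffun k => if k == l then (a k).-1 else a k].

Definition tensor_ode_solution d m (C : 'M[R]_d) (D : R -> tensor d m) : Prop :=
  (forall t, symmetric_tensor (D t)) /\
  forall (a : multi_index d), mi_abs a = m -> forall t : R,
    is_derive t 1 (fun s => tensor_at (D s) a)
      (- \sum_j \sum_l ((a j)%:R * C j l * tensor_at (D t) (mi_plus (mi_minus a j) l))).

End Defs.

(* Main.v *)
Require Import Defs.
From HB Require Import structures.
From mathcomp Require Import all_boot all_order all_algebra fingroup perm.
From mathcomp Require Import all_classical all_reals all_analysis.
From mathcomp Require Import ring lra.
Import Order.TTheory GRing.Theory Num.Theory numFieldNormedType.Exports.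
Local Open Scope classical_set_scope.
Local Open Scope ring_scope.
Set Implicit Arguments. Unset Strict Implicit. Unset Printing Implicit Defensive.

Section Comb.
Variable R : realType.
Variables d m : nat.
Local Notation idx := {ffun 'I_m -> 'I_d}.

Definition upd (i : idx) (r : 'I_m) (k : 'I_d) : idx :=
  [ffun s => if s == r then k else i s].

Lemma upd_at i r k : upd i r k r = k.
Proof. by rewrite ffunE eqxx. Qed.

Lemma upd_ne i r k s : s != r -> upd i r k s = i s.
Proof. by rewrite ffunE => /negPf ->. Qed.

Lemma upd_upd i r k l : upd (upd i r k) r l = upd i r l.
Proof. by apply/ffunP => s; rewrite !ffunE; case: eqP. Qed.

Lemma upd_id i r : upd i r (i r) = i.
Proof. by apply/ffunP => s; rewrite !ffunE; case: eqP => [->|]. Qed.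

Lemma upd_eq i r k : (upd i r k == i) = (i r == k).
Proof.
apply/eqP/eqP => [<-|<-]; first by rewrite upd_at.
exact: upd_id.
Qed.

Lemma fiber_sum (G : idx -> R) (r : 'I_m) (k0 : 'I_d) :
  \sum_i G i = \sum_(j : idx | j r == k0) \sum_k G (upd j r k).
Proof.
rewrite (partition_big (fun i : idx => i r) xpredT) //=.
rewrite exchange_big /=; apply: eq_bigr => k _.
rewrite (reindex_onto (fun j => upd j r k) (fun i => upd i r k0)) /=; last first.
  by move=> i /eqP <-; rewrite upd_upd upd_id.
apply: eq_bigl => j; rewrite upd_at eqxx /= upd_upd upd_eq; done.
Qed.

Definition act (r : 'I_m) (M : 'M[R]_d) (B : idx -> R) : idx -> R :=
  fun i => \sum_l M (i r) l * B (upd i r l).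

Definition Ften (f : 'I_m -> 'M[R]_d) (A : idx -> R) : idx -> R :=
  fun i => \sum_(k : idx) (\prod_r f r (i r) (k r)) * A k.

Lemma Ften_ext f g A : (forall r, f r = g r) -> Ften f A = Ften g A.
Proof. by move=> fg; apply: funext => i; apply: eq_bigr => k _; under eq_bigr do rewrite fg. Qed.

Lemma act_Ften r N f A :
  act r N (Ften f A) = Ften (fun r' => if r' == r then N *m f r else f r') A.
Proof.
apply: funext => i; rewrite /act /Ften.
under eq_bigr do rewrite mulr_sumr.
rewrite exchange_big /=; apply: eq_bigr => k _.
rewrite (bigD1 r) //= eqxx mxE mulr_suml mulr_suml; apply: eq_bigr => l _.
rewrite (bigD1 r) //= upd_at.
rewrite [X in _ = _ * X * _](_ : _ = \prod_(j | j != r) f j (i j) (k j)); last first.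
  by apply: eq_bigr => j /negPf jr; rewrite jr.
rewrite -!mulrA; congr (_ * (_ * _)); congr (_ * _).
by apply: eq_bigr => j jr; rewrite upd_ne.
Qed.

Lemma Ften1 A : Ften (fun _ => 1%:M) A = A.
Proof.
apply: funext => i; rewrite /Ften (bigD1 i) //= [X in _ + X]big1 ?addr0.
  by rewrite big1 ?mul1r // => r _; rewrite mxE eqxx.
move=> k ki; have [r ri] : exists r, i r != k r.
  apply/existsP; apply: contraR ki => /existsPn H; apply/eqP/ffunP => r.
  by have := H r; rewrite negbK => /eqP.
by rewrite (bigD1 r) //= mxE (negPf ri) mul0r mul0r.
Qed.

End Comb.


Lemma memsetb (T : Type) (P : pred T) x : (x \in classical_sets.mkset (fun y => P y)) = P x.
Proof. by apply/idP/idP => H; [exact: set_mem H | exact: mem_set]. Qed.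

Lemma card_count m (P : pred 'I_m) : #|classical_sets.mkset (fun r => P r)| = count P (enum 'I_m).
Proof.
rewrite cardE /enum_mem size_filter (eq_filter (a2 := predT)) // filter_predT.
by apply: eq_count => r; rewrite /= memsetb.
Qed.
Lemma count_tup m d (i : 'I_m -> 'I_d) (x : 'I_d):
  count_mem x [tuple i r | r < m] = count (fun r => i r == x) (enum 'I_m).
Proof. by rewrite /= count_map. Qed.

Section Mult.
Variables d m : nat.
Local Notation idx := {ffun 'I_m -> 'I_d}.

Lemma mult_perm (i i' : idx) : mult i = mult i' ->
  exists p : 'S_m, i' = [ffun r => i (p r)].
Proof.
move=> E.
have : perm_eq [tuple i' r | r < m] [tuple i r | r < m].
  apply/allP => x _ /=; rewrite !count_tup; apply/eqP.
  by have := congr1 (fun a : multi_index d => a x) E; rewrite !ffunE !card_count => ->.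
move/tuple_permP => [p Hp]; exists p; apply/ffunP => r; rewrite ffunE.
have := congr1 (fun s => nth (i r) s r) Hp.
by rewrite -!(tnth_nth (i r)) !tnth_mktuple.
Qed.

Lemma sym_mult (R : realType) (A : tensor R d m) (i i' : idx) :
  symmetric_tensor A -> mult i = mult i' -> A i = A i'.
Proof.
move=> sA /mult_perm [p ->]; by rewrite sA.
Qed.

Lemma tensor_at_mult (R : realType) (A : tensor R d m) (i : idx) :
  symmetric_tensor A -> tensor_at A (mult i) = A i.
Proof.
move=> sA; rewrite /tensor_at; case: pickP => [j /eqP Hj|H].
  exact: sym_mult.
by have := H i; rewrite eqxx.
Qed.

Lemma mult_sum (i : idx) k : mult i k = (\sum_r (i r == k))%N.
Proof.
rewrite ffunE card_count -sum1_count big_enum_cond /= big_mkcond /=.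
by apply: eq_bigr => r _; case: (i r == k).
Qed.

Lemma mult_upd (i : idx) r l :
  mult (upd i r l) = mi_plus (mi_minus (mult i) (i r)) l.
Proof.
apply/ffunP => k; rewrite mult_sum /mi_plus /mi_minus ffunE [X in if _ then X.+1 else X]ffunE ?mult_sum.
rewrite (bigD1 r) // [in RHS](bigD1 r) //= upd_at.
have -> : (\sum_(s | s != r) (upd i r l s == k) = \sum_(s | s != r) (i s == k))%N.
  by apply: eq_bigr => s sr; rewrite upd_ne.
rewrite [l == k]eq_sym [i r == k]eq_sym.
by case: (k == l); case: (k == i r).
Qed.

Lemma sum_slots (R : realType) (i : idx) (g : 'I_d -> R) :
  \sum_r g (i r) = \sum_j ((mult i j)%:R * g j).
Proof.
rewrite (partition_big (fun r => i r) xpredT) //=; apply: eq_bigr => j _.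
rewrite mult_sum natr_sum mulr_suml big_mkcond /=; apply: eq_bigr => r _.
by case: eqP => [->|]; rewrite ?mul1r ?mul0r.
Qed.

Lemma mi_abs_mult (i : idx) : mi_abs (mult i) = m.
Proof.
rewrite /mi_abs; under eq_bigr do rewrite mult_sum.
rewrite exchange_big /= -[RHS]card_ord -sum1_card; apply: eq_bigr => r _.
rewrite (bigD1 (i r)) //= eqxx big1 // => k /negPf; rewrite eq_sym => ->.
done.
Qed.

Lemma mult_surj (k0 : 'I_d) (a : multi_index d) : mi_abs a = m ->
  exists i : idx, mult i = a.
Proof.
move=> Ha; pose sq := flatten [seq nseq (a k) k | k <- enum 'I_d].
have Hs : size sq = m.
  rewrite size_flatten /shape -map_comp.
  rewrite (eq_map (g := fun k => a k)); last by move=> k /=; rewrite size_nseq.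
  by rewrite sumnE big_map big_enum /=.
exists [ffun r : 'I_m => nth k0 sq r]; apply/ffunP => k; rewrite mult_sum.
have -> : (\sum_r ([ffun r0 : 'I_m => nth k0 sq r0] r == k))%N = count_mem k sq.
  rewrite -[in RHS](mkseq_nth k0 sq) Hs /mkseq count_map -sum1_count big_mkcond /=.
  have -> : iota 0 m = index_iota 0 m by rewrite /index_iota subn0.
  rewrite big_mkord [in RHS]big_mkcond; apply: eq_bigr => r _; rewrite ffunE /=; by case: (_ == k).
rewrite count_flatten -map_comp.
rewrite (eq_map (g := fun j => ((j == k) * a j)%N)); last by move=> j /=; rewrite count_nseq.
rewrite sumnE big_map big_enum /= (bigD1 k) //= eqxx mul1n big1 ?addn0 //.
by move=> j /negPf ->.
Qed.

End Mult.


Lemma sqrtrX (R : realType) (x : R) n : 0 <= x -> Num.sqrt (x ^+ n) = Num.sqrt x ^+ n.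
Proof.
move=> x0; elim: n => [|n IH]; first by rewrite !expr0 sqrtr1.
by rewrite !exprS sqrtrM // IH.
Qed.

Section Ptensor.
Variable R : realType.
Variables d m : nat.
Local Notation idx := {ffun 'I_m -> 'I_d}.

Definition ptensor (y : 'cV[R]_d) : tensor R d m := fun i => \prod_r y (i r) 0.

Lemma Ften_ptensor M y : Ften (fun _ => M) (ptensor y) = ptensor (M *m y).
Proof.
apply: funext => i; rewrite /Ften /ptensor.
rewrite (eq_bigr (fun k : idx => \prod_r (M (i r) (k r) * y (k r) 0))); last first.
  by move=> k _; rewrite big_split.
rewrite -(bigA_distr_bigA (fun r l => M (i r) l * y l 0)) /=; apply: eq_bigr => r _; rewrite mxE.
by apply: eq_bigr.
Qed.

Lemma sym_ptensor y : symmetric_tensor (ptensor y).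
Proof.
move=> s i; rewrite /ptensor [RHS](reindex_inj (@perm_inj _ s)) /=.
by apply: eq_bigr => r _; rewrite ffunE.
Qed.

Lemma sym_Ften M (A : tensor R d m) :
  symmetric_tensor A -> symmetric_tensor (Ften (fun _ => M) A).
Proof.
move=> sA s i; rewrite /Ften.
have inj : injective (fun k : idx => [ffun r => k (s r)]).
  move=> k1 k2 /ffunP E; apply/ffunP => r.
  by have := E (s^-1 r)%g; rewrite !ffunE permKV.
rewrite (reindex_inj inj) /=; apply: eq_bigr => k _; rewrite sA; congr (_ * _).
rewrite [RHS](reindex_inj (@perm_inj _ s)) /=.
by apply: eq_bigr => r _; rewrite !ffunE.
Qed.

Lemma frob_ptensor y : frob (ptensor y) = norm2 y ^+ m.
Proof.
rewrite /frob /norm2 /ptensor -sqrtrX; last by apply: sumr_ge0 => k _; apply: sqr_ge0.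
congr (Num.sqrt _).
under eq_bigr do rewrite -prodrXl.
rewrite -(bigA_distr_bigA (fun (r : 'I_m) l => y l 0 ^+ 2)) /= prodr_const card_ord; done.
Qed.

Lemma fiber_sq (B : idx -> R) r (k0 : 'I_d) :
  \sum_i B i ^+ 2 = \sum_(j : idx | j r == k0) \sum_l B (upd j r l) ^+ 2.
Proof. exact: (fiber_sum (fun i => B i ^+ 2)). Qed.

Lemma fiber_act_sq (M : 'M[R]_d) (B : idx -> R) r (k0 : 'I_d) :
  \sum_i (act r M B i) ^+ 2 =
  \sum_(j : idx | j r == k0) \sum_k (\sum_l M k l * B (upd j r l)) ^+ 2.
Proof.
rewrite (fiber_sum (fun i => act r M B i ^+ 2) r k0); apply: eq_bigr => j _.
apply: eq_bigr => k _; rewrite /act upd_at; congr (_ ^+ 2).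
by apply: eq_bigr => l _; rewrite upd_upd.
Qed.

Lemma fiber_quad (M : 'M[R]_d) (B : idx -> R) r (k0 : 'I_d) :
  \sum_i B i * act r M B i =
  \sum_(j : idx | j r == k0) \sum_k B (upd j r k) * \sum_l M k l * B (upd j r l).
Proof.
rewrite (fiber_sum (fun i => B i * act r M B i) r k0); apply: eq_bigr => j _.
apply: eq_bigr => k _; rewrite /act upd_at; congr (_ * _).
by apply: eq_bigr => l _; rewrite upd_upd.
Qed.

End Ptensor.


Section Opnorm.
Variable R : realType.
Variable d : nat.
Implicit Types (x y : 'cV[R]_d) (M : 'M[R]_d).

Lemma sumsq_ge0 x : 0 <= \sum_i x i 0 ^+ 2.
Proof. by apply: sumr_ge0 => i _; apply: sqr_ge0. Qed.

Lemma norm2_ge0 x : 0 <= norm2 x.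
Proof. exact: sqrtr_ge0. Qed.

Lemma norm2_sq x : norm2 x ^+ 2 = \sum_i x i 0 ^+ 2.
Proof. by rewrite /norm2 sqr_sqrtr // sumsq_ge0. Qed.

Lemma norm2_eq0 x : norm2 x = 0 -> x = 0.
Proof.
move=> /eqP; rewrite /norm2 sqrtr_eq0 => H.
have H0 : \sum_i x i 0 ^+ 2 = 0 by apply/eqP; rewrite eq_le H sumsq_ge0.
apply/matrixP => i j; rewrite (ord1 j) mxE.
have := @psumr_eq0P R _ xpredT (fun i => x i 0 ^+ 2) (fun i _ => sqr_ge0 _) H0 i.
by move=> /(_ isT) /eqP; rewrite sqrf_eq0 => /eqP.
Qed.

Lemma norm2Z (a : R) x : norm2 (a *: x) = `|a| * norm2 x.
Proof.
rewrite /norm2 -sqrtr_sqr -sqrtrM ?sqr_ge0 //; congr (Num.sqrt _).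
by rewrite mulr_sumr; apply: eq_bigr => i _; rewrite mxE exprMn.
Qed.

Lemma entry_le_norm2 x i : `|x i 0| <= norm2 x.
Proof.
rewrite -sqrtr_sqr /norm2 ler_sqrt ?sumsq_ge0 //.
by rewrite (bigD1 i) //= lerDl; apply: sumr_ge0 => j _; apply: sqr_ge0.
Qed.

Lemma norm2_le_l1 x : norm2 x <= \sum_i `|x i 0|.
Proof.
have H0 : 0 <= \sum_i `|x i 0| by apply: sumr_ge0.
rewrite -(ger0_norm H0) -sqrtr_sqr /norm2 ler_sqrt ?sqr_ge0 //.
rewrite expr2 mulr_suml; apply: ler_sum => i _.
rewrite -real_normK ?num_real // expr2 ler_wpM2l //.
by rewrite (bigD1 i) //= lerDl; apply: sumr_ge0.
Qed.

Definition mbound M : R := \sum_i \sum_j `|M i j|.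

Lemma norm2_mul_bound M x : norm2 x <= 1 -> norm2 (M *m x) <= mbound M.
Proof.
move=> x1; apply: (le_trans (norm2_le_l1 _)); apply: ler_sum => i _.
rewrite mxE; apply: (le_trans (ler_norm_sum _ _ _)); apply: ler_sum => j _.
rewrite normrM -[X in _ <= X]mulr1 ler_wpM2l //.
exact: le_trans (entry_le_norm2 x j) x1.
Qed.

Local Notation OS M := [set norm2 (M *m x) | x in [set x : 'cV[R]_d | norm2 x <= 1]].

Lemma OS_has_sup M : has_sup (OS M).
Proof.
split; first by exists (norm2 (M *m 0)), 0 => //=; rewrite /norm2 big1 ?sqrtr0 // => i _; rewrite mxE expr0n.
exists (mbound M) => _ [x /= x1 <-]; exact: norm2_mul_bound.
Qed.

Lemma opnorm_ub M x : norm2 x <= 1 -> norm2 (M *m x) <= opnorm M.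
Proof. by move=> x1; apply: (sup_upper_bound (OS_has_sup M)); exists x. Qed.

Lemma opnorm_ge0 M : 0 <= opnorm M.
Proof.
apply: le_trans (opnorm_ub M (x := 0) _); first exact: norm2_ge0.
by rewrite /norm2 big1 ?sqrtr0 // => i _; rewrite mxE expr0n.
Qed.

Lemma opnorm_le M x : norm2 (M *m x) <= opnorm M * norm2 x.
Proof.
have [/norm2_eq0 ->|nz] := eqVneq (norm2 x) 0.
  by rewrite mulmx0 /norm2 big1 ?sqrtr0 ?mulr0 // => i _; rewrite mxE expr0n.
have pos : 0 < norm2 x by rewrite lt_neqAle eq_sym nz norm2_ge0.
have := opnorm_ub M (x := (norm2 x)^-1 *: x) _.
rewrite -scalemxAr !norm2Z ger0_norm ?invr_ge0 ?norm2_ge0 //.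
rewrite mulVf // lexx => /(_ isT).
by rewrite ler_pdivrMl // mulrC.
Qed.

Lemma opnorm_adherent M e : 0 < e ->
  exists2 x, norm2 x <= 1 & opnorm M - e < norm2 (M *m x).
Proof.
move=> e0; have [_ [x x1 <-] H] := sup_adherent e0 (OS_has_sup M).
by exists x.
Qed.

End Opnorm.


Section Bound.
Variable R : realType.
Variables d m : nat.
Variable k0 : 'I_d.
Local Notation idx := {ffun 'I_m -> 'I_d}.

Lemma frob_ge0 (A : idx -> R) : 0 <= frob A.
Proof. exact: sqrtr_ge0. Qed.

Lemma sumsqT_ge0 (A : idx -> R) : 0 <= \sum_i A i ^+ 2.
Proof. by apply: sumr_ge0 => i _; apply: sqr_ge0. Qed.

Lemma frob_act r (M : 'M[R]_d) (B : idx -> R) :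
  frob (act r M B) <= opnorm M * frob B.
Proof.
rewrite /frob -(ger0_norm (opnorm_ge0 M)) -sqrtr_sqr -sqrtrM ?sqr_ge0 //.
rewrite ler_sqrt; last by rewrite mulr_ge0 ?sqr_ge0 ?sumsqT_ge0.
rewrite (fiber_act_sq M B r k0) (fiber_sq B r k0) mulr_sumr; apply: ler_sum => j _.
pose x : 'cV[R]_d := \col_l B (upd j r l).
have E1 : \sum_k (\sum_l M k l * B (upd j r l)) ^+ 2 = norm2 (M *m x) ^+ 2.
  by rewrite norm2_sq; apply: eq_bigr => k _; rewrite !mxE; congr (_ ^+ 2); apply: eq_bigr => l _; rewrite mxE.
have E2 : \sum_l B (upd j r l) ^+ 2 = norm2 x ^+ 2.
  by rewrite norm2_sq; apply: eq_bigr => l _; rewrite mxE.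
rewrite E1 E2 -exprMn.
by rewrite lerXn2r ?nnegrE ?norm2_ge0 ?mulr_ge0 ?opnorm_ge0 ?norm2_ge0 // opnorm_le.
Qed.

Definition fn (M : 'M[R]_d) (n : nat) : 'I_m -> 'M[R]_d :=
  fun r => if (r < n)%N then M else 1%:M.

Lemma Ften_fn_bound M (A : idx -> R) n : (n <= m)%N ->
  frob (Ften (fn M n) A) <= opnorm M ^+ n * frob A.
Proof.
elim: n => [_|n IH nm].
  by rewrite expr0 mul1r (Ften_ext (g := fun _ => 1%:M)) ?Ften1.
pose r0 : 'I_m := Ordinal nm.
have -> : Ften (fn M n.+1) A = act r0 M (Ften (fn M n) A).
  rewrite act_Ften; apply: Ften_ext => r; rewrite /fn.
  case: eqP => [->|/eqP rr0] /=; first by rewrite ltnn ltnSn mulmx1.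
  rewrite ltnS leq_eqVlt.
  have -> : (nat_of_ord r == n) = false.
    by apply/negP => /eqP rn; move/eqP: rr0; apply; apply/val_inj.
  done.
apply: le_trans (frob_act _ _ _) _.
by rewrite exprS -mulrA ler_wpM2l ?opnorm_ge0 // IH // ltnW.
Qed.

Lemma Ften_bound M (A : idx -> R) :
  frob (Ften (fun _ => M) A) <= opnorm M ^+ m * frob A.
Proof.
rewrite -(Ften_ext (f := fn M m)) ?Ften_fn_bound // => r.
by rewrite /fn ltn_ord.
Qed.

End Bound.


Section SeriesAux.
Variable R : realType.

Lemma fact_neq0 k : (k`!%:R : R) != 0.
Proof. by rewrite pnatr_eq0 -lt0n fact_gt0. Qed.

Lemma diffs_bound (a : R^nat) B N :
  (forall k, `|a k| <= B * (N ^+ k / k`!%:R)) ->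
  forall k, `|pseries_diffs a k| <= (B * N) * (N ^+ k / k`!%:R).
Proof.
move=> H k; rewrite /pseries_diffs normrM normr_nat.
apply: le_trans (ler_wpM2l (ler0n _ _) (H k.+1)) _.
rewrite le_eqVlt; apply/orP; left; apply/eqP.
rewrite factS natrM invfM exprS.
rewrite mulrCA -[B * N * _]mulrA; congr (B * _).
rewrite -!mulrA mulrCA; congr (N * _).
by rewrite mulrCA mulVKf ?pnatr_eq0.
Qed.

Lemma cvg_pseries_bound (a : R^nat) B N x : 0 <= N ->
  (forall k, `|a k| <= B * (N ^+ k / k`!%:R)) -> cvgn (pseries a x).
Proof.
move=> N0 H.
have B0 : 0 <= B.
  have := H 0%N; rewrite expr0 fact0 invr1 mulr1 => H0.
  rewrite mulr1 in H0; exact: le_trans (normr_ge0 _) H0.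
apply: normed_cvg; rewrite /normed_series_of /=.
apply: (@series_le_cvg _ _ (B *: exp_coeff (N * `|x|))).
- by move=> k.
- by move=> k; rewrite /= mulr_ge0 // exp_coeff_ge0 // mulr_ge0.
- move=> k; rewrite /= /exp_coeff /= normrM normrX.
  apply: le_trans (ler_wpM2r (exprn_ge0 _ (normr_ge0 x)) (H k)) _.
  have -> : (B *: (fun n : nat => (N * `|x|) ^+ n / n`!%:R)) k = B * ((N * `|x|) ^+ k / k`!%:R) by [].
  rewrite exprMn le_eqVlt; apply/orP; left; apply/eqP.
  by rewrite -!mulrA [_^-1 * _]mulrC.
- by apply: is_cvg_seriesZ; apply: is_cvg_series_exp_coeff.
Qed.

Lemma series_sum_lim (I : Type) (s : seq I) (u : I -> R^nat) :
  (forall p, cvgn (series (u p))) ->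
  cvgn (series (fun k => \sum_(p <- s) u p k)) /\
  limn (series (fun k => \sum_(p <- s) u p k)) = \sum_(p <- s) limn (series (u p)).
Proof.
move=> H; elim: s => [|x s [IH1 IH2]].
  have -> : series (fun k => \sum_(p <- [::]) u p k) = (fun _ => 0 : R).
    by apply: funext => k; rewrite /series /= big1 // => i _; rewrite big_nil.
  by rewrite big_nil; split; [apply: is_cvg_cst | apply: lim_cst].
have -> : (fun k => \sum_(p <- x :: s) u p k) = u x + (fun k => \sum_(p <- s) u p k).
  by apply: funext => k; rewrite big_cons.
split; first exact: is_cvg_seriesD.
by rewrite lim_seriesD // big_cons IH2.
Qed.

End SeriesAux.

Section Expm.
Variable R : realType.
Variable n : nat.
Local Notation d := n.+1.
Variable C : 'M[R]_d.

Definition cc (i j : 'I_d) : R^nat := fun k => ((- C) ^+ k) i j / (k`!)%:R.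
Definition Nc : R := \sum_p \sum_q `|C p q|.

Lemma Nc_ge0 : 0 <= Nc.
Proof. by apply: sumr_ge0 => p _; apply: sumr_ge0. Qed.

Lemma row_le_Nc i : \sum_q `|C i q| <= Nc.
Proof.
rewrite /Nc [X in _ <= X](bigD1 i) //= lerDl; apply: sumr_ge0 => p _; apply: sumr_ge0 => q _; exact: normr_ge0.
Qed.

Lemma pow_entry_bound k i j : `|((- C) ^+ k) i j| <= Nc ^+ k.
Proof.
elim: k i j => [|k IH] i j.
  by rewrite !expr0 mxE; case: (i == j); rewrite ?normr1 ?normr0.
rewrite exprS -mulmxE mxE; apply: le_trans (ler_norm_sum _ _ _) _.
apply: (@le_trans _ _ (\sum_q `|C i q| * Nc ^+ k)).
  apply: ler_sum => q _; rewrite normrM mxE normrN.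
  by apply: ler_wpM2l => //; apply: IH.
by rewrite -mulr_suml exprS ler_wpM2r ?exprn_ge0 ?Nc_ge0 ?row_le_Nc.
Qed.

Lemma cc_bound i j k : `|cc i j k| <= 1 * (Nc ^+ k / k`!%:R).
Proof.
rewrite mul1r /cc normrM normfV normr_nat ler_wpM2r ?invr_ge0 //.
exact: pow_entry_bound.
Qed.

Lemma cvg_cc i j x : cvgn (pseries (cc i j) x).
Proof. exact: (cvg_pseries_bound (B := 1) Nc_ge0 (@cc_bound i j)). Qed.

Lemma cvg_cc1 i j x : cvgn (pseries (pseries_diffs (cc i j)) x).
Proof. exact: (cvg_pseries_bound Nc_ge0 (diffs_bound (@cc_bound i j))). Qed.

Lemma cvg_cc2 i j x : cvgn (pseries (pseries_diffs (pseries_diffs (cc i j))) x).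
Proof. exact: (cvg_pseries_bound Nc_ge0 (diffs_bound (diffs_bound (@cc_bound i j)))). Qed.

Local Notation E t := (expmx (- (t *: C))).

Lemma expE (t : R) (i j : 'I_d) : E t i j = limn (pseries (cc i j) t).
Proof.
rewrite mxE /pseries; congr (limn (series _)); apply: funext => k /=.
rewrite /cc -scalerN exprZn mxE.
by rewrite -mulrA mulrC.
Qed.

Lemma diffs_cc_term i j t k :
  pseries_diffs (cc i j) k * t ^+ k = \sum_p ((- C) i p *: (fun k => cc p j k * t ^+ k)) k.
Proof.
rewrite /pseries_diffs /cc factS natrM invfM exprS -mulmxE mxE.
rewrite mulrCA mulVKf ?pnatr_eq0 //.
rewrite !mulr_suml; apply: eq_bigr => p _ /=.
have -> : ((- C) i p *: (fun k0 : nat => ((- C) ^+ k0) p j / k0`!%:R * t ^+ k0)) k = (- C) i p * (((- C) ^+ k) p j / k`!%:R * t ^+ k) by [].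
by rewrite !mulrA.
Qed.

Lemma is_derive_E (t : R) (i j : 'I_d) :
  is_derive t 1 (fun s => E s i j) (- (C *m E t) i j).
Proof.
have -> : (fun s => E s i j) = (fun s => limn (pseries (cc i j) s)).
  by apply: funext => s; rewrite expE.
suff -> : - (C *m E t) i j = limn (pseries (pseries_diffs (cc i j)) t).
  apply: (pseries_snd_diffs (K := `|t| + 1)).
  - exact: cvg_cc.
  - exact: cvg_cc1.
  - exact: cvg_cc2.
  - by rewrite [X in _ < X]ger0_norm ?addr_ge0 // ltrDl.
rewrite /pseries.
have -> : (fun k => pseries_diffs (cc i j) k * t ^+ k) =
   (fun k => \sum_(p <- index_enum 'I_d) ((- C) i p *: (fun k => cc p j k * t ^+ k)) k).
  by apply: funext => k; rewrite diffs_cc_term.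
have [_ ->] := @series_sum_lim R _ (index_enum 'I_d) (fun p => (- C) i p *: (fun k => cc p j k * t ^+ k))
  (fun p => is_cvg_seriesZ (@cvg_cc p j t)).
rewrite mxE -sumrN; apply: eq_bigr => p _.
rewrite lim_seriesZ; last exact: cvg_cc.
by rewrite -expE mxE [(- C) i p]mxE -mulNr.
Qed.

Lemma E0 : E 0 = 1%:M.
Proof.
apply/matrixP => i j; rewrite expE.
apply: lim_near_cst => //; near=> k.
rewrite -[k]prednK; last by near: k.
rewrite /pseries /series /= big_nat_recl // big1 ?addr0 => [|l _].
  by rewrite /cc !expr0 mulr1 fact0 invr1 mulr1.
by rewrite expr0n mulr0.
Unshelve. all: by end_near.
Qed.

End Expm.


Section DerivAux.
Variable R : realType.

Lemma is_derive_bigsum (I : Type) (s : seq I) (f : I -> R -> R) (df : I -> R) (t : R) :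
  (forall r, is_derive t 1 (f r) (df r)) ->
  is_derive t 1 (fun x => \sum_(r <- s) f r x) (\sum_(r <- s) df r).
Proof.
move=> H; elim: s => [|x s IH].
  have -> : (fun x => \sum_(r <- [::]) f r x) = cst 0.
    by apply: funext => y; rewrite big_nil.
  rewrite big_nil; exact: is_derive_cst.
have -> : (fun y => \sum_(r <- x :: s) f r y) = f x + (fun y => \sum_(r <- s) f r y).
  by apply: funext => y; rewrite big_cons.
rewrite big_cons; exact: is_deriveD.
Qed.

Lemma is_derive_mulc (f : R -> R) (df c t : R) :
  is_derive t 1 f df -> is_derive t 1 (fun x => f x * c) (df * c).
Proof.
move=> H.
have -> : (fun x => f x * c) = c \*: f by apply: funext => x; rewrite /= mulrC.
rewrite mulrC; exact: is_deriveZ.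
Qed.

Lemma is_derive_bigprod (I : eqType) (s : seq I) (f : I -> R -> R) (df : I -> R) (t : R) :
  uniq s -> (forall r, is_derive t 1 (f r) (df r)) ->
  is_derive t 1 (fun x => \prod_(r <- s) f r x)
    (\sum_(r <- s) df r * \prod_(r' <- s | r' != r) f r' t).
Proof.
move=> + H; elim: s => [_|x s IH /andP [xs us]].
  have -> : (fun x => \prod_(r <- [::]) f r x) = cst 1.
    by apply: funext => y; rewrite big_nil.
  rewrite big_nil; exact: is_derive_cst.
have -> : (fun y => \prod_(r <- x :: s) f r y) = f x * (fun y => \prod_(r <- s) f r y).
  by apply: funext => y; rewrite big_cons.
apply: is_derive_eq; first exact: is_deriveM (H x) (IH us).
rewrite big_cons /= big_cons eqxx /= addrC; congr (_ + _).
  rewrite /GRing.scale /= mulrC; congr (_ * _).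
  rewrite big_seq_cond [RHS]big_seq_cond; apply: eq_bigl => r.
  by case: (boolP (r \in s)) => //= rs; apply/esym/negP => /eqP rx; rewrite -rx rs in xs.
rewrite /GRing.scale /= mulr_sumr; apply: eq_big_seq => r rs.
rewrite big_cons.
have -> : (x != r) = true by apply/negP => /eqP xr; rewrite xr rs in xs.
by rewrite mulrCA.
Qed.

End DerivAux.

Section ODE.
Variable R : realType.
Variables n m : nat.
Local Notation d := n.+1.
Local Notation idx := {ffun 'I_m -> 'I_d}.
Variable C : 'M[R]_d.

Definition tuple_ode (D : R -> tensor R d m) : Prop :=
  forall (i : idx) (t : R), is_derive t 1 (fun s => D s i) (- \sum_r act r C (D t) i).

Lemma act_mult_identity (X : tensor R d m) (i : idx) : symmetric_tensor X ->
  \sum_r act r C X i =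
  \sum_j \sum_l ((mult i j)%:R * C j l * tensor_at X (mi_plus (mi_minus (mult i) j) l)).
Proof.
move=> sX; rewrite /act.
rewrite (eq_bigr (fun r => (fun j => \sum_l C j l * tensor_at X (mi_plus (mi_minus (mult i) j) l)) (i r))); last first.
  move=> r _ /=; apply: eq_bigr => l _; by rewrite -mult_upd tensor_at_mult.
rewrite (@sum_slots d m R i (fun j => \sum_l C j l * tensor_at X (mi_plus (mi_minus (mult i) j) l))); apply: eq_bigr => j _; rewrite mulr_sumr; apply: eq_bigr => l _.
by rewrite mulrA.
Qed.

Lemma ode_to_tuple (D : R -> tensor R d m) :
  tensor_ode_solution C D -> tuple_ode D.
Proof.
move=> [sD H] i t.
have := H (mult i) (mi_abs_mult i) t.
have -> : (fun s => tensor_at (D s) (mult i)) = (fun s => D s i).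
  by apply: funext => s; rewrite tensor_at_mult.
by rewrite -act_mult_identity.
Qed.

Lemma tuple_to_ode (D : R -> tensor R d m) :
  (forall t, symmetric_tensor (D t)) -> tuple_ode D -> tensor_ode_solution C D.
Proof.
move=> sD H; split => // a Ha t.
have [i <-] := mult_surj ord0 Ha.
have -> : (fun s => tensor_at (D s) (mult i)) = (fun s => D s i).
  by apply: funext => s; rewrite tensor_at_mult.
by rewrite -act_mult_identity.
Qed.

Local Notation E t := (expmx (- (t *: C))).

Lemma act_Ften_const r (M N : 'M[R]_d) (A : tensor R d m) (i : idx) :
  act r N (Ften (fun _ => M) A) i =
  \sum_(k : idx) ((N *m M) (i r) (k r) * \prod_(r' | r' != r) M (i r') (k r')) * A k.
Proof.
rewrite act_Ften /Ften; apply: eq_bigr => k _; rewrite (bigD1 r) //= eqxx.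
by congr (_ * _ * _); apply: eq_bigr => r' /negPf ->.
Qed.

Lemma Ften_solves (A0 : tensor R d m) : tuple_ode (fun s => Ften (fun _ => E s) A0).
Proof.
move=> i t.
apply: (@is_derive_eq _ _ _ _ _ _ _ (\sum_(k : idx) (\sum_r (- (C *m E t) (i r) (k r)) *
     \prod_(r' | r' != r) E t (i r') (k r')) * A0 k)).
  rewrite /Ften.
  have H : forall k : idx, is_derive t 1 (fun s => (\prod_r E s (i r) (k r)) * A0 k)
     ((\sum_r (- (C *m E t) (i r) (k r)) * \prod_(r' | r' != r) E t (i r') (k r')) * A0 k).
    move=> k; apply: is_derive_mulc.
    apply: (is_derive_bigprod (f := fun r s => E s (i r) (k r))); first exact: index_enum_uniq.
    move=> r; exact: is_derive_E.
  exact: (is_derive_bigsum (index_enum idx) H).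
rewrite -sumrN; under [RHS]eq_bigr do rewrite act_Ften_const -sumrN.
rewrite [RHS]exchange_big /=; apply: eq_bigr => k _.
rewrite mulr_suml; apply: eq_bigr => r _.
by rewrite -!mulNr.
Qed.

End ODE.


Section Energy.
Variable R : realType.
Variables n m : nat.
Local Notation d := n.+1.
Local Notation idx := {ffun 'I_m -> 'I_d}.
Variable C : 'M[R]_d.

Lemma quad_mx (A : 'M[R]_d) (x : 'cV[R]_d) :
  (x^T *m A *m x) 0 0 = \sum_k x k 0 * \sum_l A k l * x l 0.
Proof.
rewrite mxE; under eq_bigr do rewrite mxE mulr_suml.
rewrite exchange_big /=; apply: eq_bigr => k _; rewrite mulr_sumr; apply: eq_bigr => l _.
by rewrite mxE mulrA.
Qed.

Lemma psd_quad : psd (symp C) -> forall x : 'cV[R]_d,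
  0 <= \sum_k x k 0 * \sum_l C k l * x l 0.
Proof.
move=> [_ H] x; have := H x; rewrite quad_mx.
have -> : \sum_k x k 0 * \sum_l symp C k l * x l 0 =
   2^-1 * (\sum_k x k 0 * \sum_l C k l * x l 0 + \sum_k x k 0 * \sum_l C l k * x l 0).
  rewrite -big_split mulr_sumr; apply: eq_bigr => k _.
  rewrite /= -mulrDr -big_split !mulr_sumr; apply: eq_bigr => l _.
  rewrite /symp !mxE /= -mulrDl.
  by rewrite !mulrA [x k 0 * 2^-1]mulrC.
have -> : \sum_k x k 0 * \sum_l C l k * x l 0 = \sum_k x k 0 * \sum_l C k l * x l 0.
  under eq_bigr do rewrite mulr_sumr.
  rewrite exchange_big /=; apply: eq_bigr => k _; rewrite mulr_sumr; apply: eq_bigr => l _.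
  by rewrite mulrCA [RHS]mulrCA [x l 0 * _]mulrC.
rewrite pmulr_rge0 ?invr_gt0 ?ltr0n // => H0.
by move: H0; rewrite /= -mulr2n pmulrn_lge0.
Qed.

Lemma act_quad_ge0 (Z : idx -> R) r : psd (symp C) -> 0 <= \sum_i Z i * act r C Z i.
Proof.
move=> pC; rewrite (fiber_quad C Z r ord0); apply: sumr_ge0 => j _.
have := psd_quad pC (\col_k Z (upd j r k)).
by under eq_bigr do (rewrite mxE; under eq_bigr do rewrite mxE).
Qed.

Lemma nonincr_zero (e de : R -> R) (t : R) : 0 <= t ->
  (forall x : R, is_derive x 1 e (de x)) -> (forall x, 0 <= x -> de x <= 0) ->
  e 0 = 0 -> (forall x, 0 <= e x) -> e t = 0.
Proof.
move=> t0 De dle e0 ege.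
have [->|tn0] := eqVneq t 0; first exact: e0.
have tpos : 0 < t by rewrite lt_neqAle eq_sym tn0.
have [c /andP [c0 ct] H] : exists2 c, c \in `]0, t[ & e t - e 0 = de c * (t - 0).
  apply: MVT => //.
  by apply: derivable_within_continuous => x _; apply: ex_derive; exact: De.
rewrite e0 subr0 subr0 in H; apply/eqP; rewrite eq_le ege andbT H.
move: c0; rewrite bnd_simp => c0.
by rewrite mulr_le0_ge0 ?dle // ?ltW.
Qed.

Lemma act_sub r (M : 'M[R]_d) (X Y : idx -> R) i :
  act r M (fun i => X i - Y i) i = act r M X i - act r M Y i.
Proof. by rewrite /act -sumrB; apply: eq_bigr => l _; rewrite mulrBr. Qed.

Lemma sumsq_eq0 (Z : idx -> R) : \sum_i Z i ^+ 2 = 0 -> forall i, Z i = 0.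
Proof.
move=> H i.
have := @psumr_eq0P R _ xpredT (fun i => Z i ^+ 2) (fun i _ => sqr_ge0 _) H i.
by move=> /(_ isT) /eqP; rewrite sqrf_eq0 => /eqP.
Qed.

Lemma tuple_ode_unique (D1 D2 : R -> tensor R d m) (t : R) : psd (symp C) ->
  tuple_ode C D1 -> tuple_ode C D2 -> D1 0 = D2 0 -> 0 <= t -> D1 t = D2 t.
Proof.
move=> pC H1 H2 E0 t0.
pose Z s i := D1 s i - D2 s i.
pose dZ x i := - \sum_r act r C (Z x) i.
have DZ : forall (i : idx) (x : R), is_derive x 1 (fun s => Z s i) (dZ x i).
  move=> i x; apply: is_derive_eq; first exact: is_deriveB (H1 i x) (H2 i x).
  rewrite /dZ /Z opprK addrC -sumrB -sumrN; apply: eq_bigr => r _.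
  by rewrite act_sub opprB.
pose e s := \sum_i Z s i ^+ 2.
pose de x := \sum_(i : idx) (Z x i *: dZ x i + Z x i *: dZ x i).
have De : forall x : R, is_derive x 1 e (de x).
  move=> x; apply: (is_derive_bigsum (index_enum idx)) => i.
  have -> : (fun s => Z s i ^+ 2) = (fun s => Z s i) * (fun s => Z s i).
    by apply: funext => s; rewrite /= expr2.
  exact: is_deriveM.
have dle : forall x, 0 <= x -> de x <= 0.
  move=> x _; rewrite /de.
  have -> : \sum_(i : idx) (Z x i *: dZ x i + Z x i *: dZ x i) = (\sum_i Z x i * dZ x i) *+ 2.
    by rewrite -sumrMnl; apply: eq_bigr => i _; rewrite mulr2n.
  rewrite pmulrn_lle0 // /dZ.
  under eq_bigr do rewrite mulrN mulr_sumr.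
  rewrite sumrN exchange_big /= oppr_le0; apply: sumr_ge0 => r _.
  exact: act_quad_ge0.
have e0 : e 0 = 0.
  by rewrite /e big1 // => i _; rewrite /Z E0 subrr expr0n.
have ege : forall x, 0 <= e x by move=> x; apply: sumr_ge0 => i _; apply: sqr_ge0.
have := nonincr_zero t0 De dle e0 ege.
move/sumsq_eq0 => HZ; apply: funext => i; apply/eqP; rewrite -subr_eq0; apply/eqP.
exact: HZ.
Qed.

End Energy.


Section Final.
Variable R : realType.

Lemma pow_diff (h y : R) k : 0 <= y -> y <= h ->
  h ^+ k.+1 - y ^+ k.+1 <= k.+1%:R * h ^+ k * (h - y).
Proof.
move=> y0 yh; elim: k => [|k IH].
  by rewrite !expr1 expr0 mulr1 mul1r.
have -> : h ^+ k.+2 - y ^+ k.+2 = h * (h ^+ k.+1 - y ^+ k.+1) + y ^+ k.+1 * (h - y).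
  rewrite !exprS; ring.
have h0 : 0 <= h := le_trans y0 yh.
have hy : 0 <= h - y by rewrite subr_ge0.
apply: (@le_trans _ _ (h * (k.+1%:R * h ^+ k * (h - y)) + h ^+ k.+1 * (h - y))).
  apply: lerD; first by rewrite ler_wpM2l.
  by rewrite ler_wpM2r // lerXn2r // nnegrE.
rewrite le_eqVlt; apply/orP; left; apply/eqP.
rewrite -[k.+2]addn1 natrD !exprS; ring.
Qed.

Lemma pow_gap (h s : R) k : 0 <= h -> s < h ^+ k.+1 ->
  exists2 e, 0 < e & forall y, 0 <= y -> h - e < y -> s < y ^+ k.+1.
Proof.
move=> h0 sh.
have Kpos : 0 < k.+1%:R * h ^+ k + 1 by rewrite ltr_pwDr // mulr_ge0 // exprn_ge0.
exists ((h ^+ k.+1 - s) / (k.+1%:R * h ^+ k + 1)).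
  by rewrite divr_gt0 // subr_gt0.
move=> y y0 hy.
have [hy'|yh] := leP h y.
  by apply: lt_le_trans sh _; rewrite lerXn2r // nnegrE.
have := pow_diff k y0 (ltW yh).
set e := (h ^+ k.+1 - s) / (k.+1%:R * h ^+ k + 1).
have he : h - y < e by rewrite ltrBlDl -ltrBlDr.
have eK : e * (k.+1%:R * h ^+ k + 1) = h ^+ k.+1 - s.
  by rewrite /e mulfVK // gt_eqF.
have Kh : 0 <= k.+1%:R * h ^+ k by rewrite mulr_ge0 // exprn_ge0.
have : k.+1%:R * h ^+ k * (h - y) < h ^+ k.+1 - s.
  rewrite -eK; apply: (@le_lt_trans _ _ (k.+1%:R * h ^+ k * e)).
    by rewrite ler_wpM2l // ltW.
  have e0 : 0 < e by apply: le_lt_trans he; rewrite subr_ge0 ltW.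
  by rewrite mulrDr mulr1 [e * _]mulrC ltrDl.
move=> H1 H2; have := le_lt_trans H2 H1.
by rewrite ltrD2l ltrN2.
Qed.

Lemma frob_eq0 d m (X : tensor R d m) : frob X = 0 -> X = (fun _ => 0).
Proof.
move=> /eqP; rewrite /frob sqrtr_eq0 => H.
have H0 : \sum_i X i ^+ 2 = 0.
  by apply/eqP; rewrite eq_le H; apply: sumr_ge0 => i _; apply: sqr_ge0.
apply: funext => i.
have := @psumr_eq0P R _ xpredT (fun i => X i ^+ 2) (fun i _ => sqr_ge0 _) H0 i.
by move=> /(_ isT) /eqP; rewrite sqrf_eq0 => /eqP.
Qed.

End Final.

Unset Implicit Arguments.

Theorem theorem6p1 (R : realType) (d : nat) (C : 'M[R]_d) :
  (0 < d)%N -> conditionA C ->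
  let h := fun t : R => opnorm (expmx (- (t *: C))) in
  forall m : nat, (0 < m)%N ->
    (forall D : R -> tensor R d m, tensor_ode_solution C D ->
       forall t : R, 0 <= t -> frob (D t) <= h t ^+ m * frob (D 0))
    /\
    (forall t : R, 0 <= t ->
       sup [set frob (D t) / frob (D 0) | D in
              [set D : R -> tensor R d m | tensor_ode_solution C D /\ D 0 <> (fun _ => 0)]]
       = h t ^+ m).
Proof.
case: d C => [|n] C // _ [pC _] h m m0.
have part1 : forall D : R -> tensor R n.+1 m, tensor_ode_solution C D ->
    forall t : R, 0 <= t -> frob (D t) <= h t ^+ m * frob (D 0).
  move=> D HD t t0.
  have -> : D t = Ften (fun _ => expmx (- (t *: C))) (D 0).
    apply: (tuple_ode_unique pC (ode_to_tuple HD) (Ften_solves C (D 0))) => //.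
    by rewrite E0 Ften1.
  exact: Ften_bound ord0 _ _.
split => // t t0.
set P := [set D : R -> tensor R n.+1 m | tensor_ode_solution C D /\ D 0 <> (fun _ => 0)].
set S := [set frob (D t) / frob (D 0) | D in P].
pose Dy (y : 'cV[R]_n.+1) := fun s : R => Ften (fun _ => expmx (- (s *: C))) ((@ptensor R n.+1 m y)).
have Dy_sol : forall y, tensor_ode_solution C (Dy y).
  move=> y; apply: tuple_to_ode; last exact: Ften_solves.
  by move=> s; apply: sym_Ften; apply: sym_ptensor.
have Dy0 : forall y, Dy y 0 = (@ptensor R n.+1 m y) by move=> y; rewrite /Dy E0 Ften1.
have Dyt : forall y, Dy y t = (@ptensor R n.+1 m (expmx (- (t *: C)) *m y)).
  by move=> y; rewrite /Dy Ften_ptensor.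
have inS : forall y, norm2 y != 0 ->
    S (norm2 (expmx (- (t *: C)) *m y) ^+ m / norm2 y ^+ m).
  move=> y ny; exists (Dy y); last by rewrite Dyt Dy0 !frob_ptensor.
  split; first exact: Dy_sol.
  move=> H; have : frob ((@ptensor R n.+1 m y)) = 0.
    by rewrite -Dy0 H /frob big1 ?sqrtr0 // => i _; rewrite expr0n.
  rewrite frob_ptensor => /eqP; rewrite expf_eq0 (negPf ny) andbF //.
have Sge0 : forall z, S z -> 0 <= z.
  by move=> _ [D _ <-]; rewrite divr_ge0 // sqrtr_ge0.
have Sub : forall z, S z -> z <= h t ^+ m.
  move=> _ [D [HD D0] <-].
  have fpos : 0 < frob (D 0).
    rewrite lt_neqAle sqrtr_ge0 andbT eq_sym; apply/eqP => /frob_eq0 //.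
  by rewrite ler_pdivrMr //; exact: part1.
pose y1 : 'cV[R]_n.+1 := const_mx 1.
have ny1 : norm2 y1 != 0.
  rewrite /norm2 sqrtr_eq0 -ltNge (bigD1 ord0) //= mxE expr1n.
  by rewrite ltr_pwDl // sumr_ge0 // => i _; apply: sqr_ge0.
have Sne : S !=set0 by eexists; apply: (inS _ ny1).
have hasS : has_sup S by split => //; exists (h t ^+ m) => z; exact: Sub.
apply/eqP; rewrite eq_le; apply/andP; split.
  by apply: ge_sup => // z; exact: Sub.
set s := sup S.
have s0 : 0 <= s.
  have [z Sz] := Sne; apply: le_trans (Sge0 _ Sz) _.
  exact: sup_upper_bound.
have key : forall x, norm2 x <= 1 -> norm2 (expmx (- (t *: C)) *m x) ^+ m <= s.
  move=> x x1; have [/norm2_eq0 ->|nx] := eqVneq (norm2 x) 0.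
    rewrite mulmx0 /norm2 big1 ?sqrtr0 ?expr0n ?gtn_eqF //= => i _.
    by rewrite mxE expr0n.
  have Hz : norm2 (expmx (- (t *: C)) *m x) ^+ m / norm2 x ^+ m <= s.
    by move: (inS x nx); apply: sup_upper_bound.
  apply: le_trans Hz.
  have nxp : 0 < norm2 x ^+ m by rewrite exprn_gt0 // lt_neqAle eq_sym nx norm2_ge0.
  rewrite ler_pdivlMr // ler_piMr ?exprn_ge0 ?norm2_ge0 //.
  by rewrite exprn_ile1 ?norm2_ge0.
rewrite leNgt; apply/negP => hs.
case: m m0 part1 P S Dy Dy_sol Dy0 Dyt inS Sge0 Sub Sne hasS s s0 key hs => [//|k] _ _ P S Dy _ _ _ _ _ _ _ _ s s0 key hs.
have [e e0 He] := pow_gap (opnorm_ge0 _) hs.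
have [x x1 hx] := opnorm_adherent (expmx (- (t *: C))) e0.
have := key x x1; rewrite leNgt => /negP; apply.
by apply: He => //; apply: norm2_ge0.
Qed.
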